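(* The proportional-cumulative is the unique Level-SP PAF $\psi:\mathcal P^N\to\mathcal P$ satisfying proportionality, where the proportional-cumulative is the PAF whose associated CAF is $$\Psi(\mathbf P)(a)=\operatorname{median}\Big(P_1(a),\dots,P_n(a),\tfrac1n,\tfrac2n,\dots,\tfrac{n-1}n\Big)\quad(a\in\Lambda,\ \mathbf P\in\mathcal C^N).$$
   Context: Let $N=\{1,\dots,n\}$, $\Lambda\subseteq\mathbb R$ a nonempty Borel set, $\mathcal P$ the Borel probability measures on $\Lambda$, $\mathcal C$ the CDFs on $\Lambda$, $\pi(p)(a)=p(\{x\in\Lambda:x\le a\})$. A PAF is a map $\psi:\mathcal P^N\to\mathcal P$ with associated CAF $\Psi$ given by $\Psi(\pi(p_1),\dots,\pi(p_n))=\pi(\psi(p_1,\dots,p_n))$; $P_i=\pi(p_i)$. $\mathbf z_{-i}(z_i')$ is $\mathbf z$ with $i$-th coordinate replaced by $z_i'$. $\psi$ is Level-SP if for every $i$, $\mathbf P$, $P_i'$, $a$: $P_i(a)<\Psi(\mathbf P)(a)\Rightarrow\Psi(\mathbf P)(a)\le\Psi(\mathbf P_{-i}(P_i'))(a)$ and $P_i(a)>\Psi(\mathbf P)(a)\Rightarrow\Psi(\mathbf P)(a)\ge\Psi(\mathbf P_{-i}(P_i'))(a)$. $\psi$ satisfies proportionality if $\psi(\delta_{a_1},\dots,\delta_{a_n})=\frac1n\sum_{i\in N}\delta_{a_i}$ for all $(a_1,\dots,a_n)\in\Lambda^N$, where $\delta_a$ is the Dirac mass at $a$. The median of $2n-1$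 numbers is the $n$-th smallest. *)

(* Defs.v *)
From HB Require Import structures.
From mathcomp Require Import all_boot all_order all_algebra.
From mathcomp Require Import all_classical all_reals all_analysis.
Set Implicit Arguments. Unset Strict Implicit. Unset Printing Implicit Defensive.
Import Order.TTheory GRing.Theory Num.Theory.
Local Open Scope classical_set_scope.
Local Open Scope ring_scope.

(* Probability measures on Lambda are represented as Borel probability
   measures on R concentrated on the Borel set Lambda (L). *)
Definition onL (R : realType) (L : set R) (p : probability R R) : Prop :=
  p (~` L) = 0%E.

Definition cdf (R : realType) (L : set R) (p : probability R R) (a : R) : \bar R :=
  p (L `&` `]-oo, a]).

Definition repl (R : realType) (n : nat) (ps : 'I_n -> probability R R)
  (i : 'I_n) (q : probability R R) : 'I_n -> probability R R :=
  fun j => if j == i then q else ps j.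

Definition isPAF (R : realType) (n : nat) (L : set R)
  (psi : ('I_n -> probability R R) -> probability R R) : Prop :=
  forall ps, (forall i, onL L (ps i)) -> onL L (psi ps).

Definition LevelSP (R : realType) (n : nat) (L : set R)
  (psi : ('I_n -> probability R R) -> probability R R) : Prop :=
  forall (i : 'I_n) (ps : 'I_n -> probability R R) (q : probability R R) (a : R),
    (forall j, onL L (ps j)) -> onL L q -> L a ->
    ((cdf L (ps i) a < cdf L (psi ps) a)%E ->
        (cdf L (psi ps) a <= cdf L (psi (repl ps i q)) a)%E) /\
    ((cdf L (ps i) a > cdf L (psi ps) a)%E ->
        (cdf L (psi ps) a >= cdf L (psi (repl ps i q)) a)%E).

Definition proportional (R : realType) (n : nat) (L : set R)
  (psi : ('I_n -> probability R R) -> probability R R) : Prop :=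
  forall (a : 'I_n -> R) (ps : 'I_n -> probability R R),
    (forall i, L (a i)) ->
    (forall i A, measurable A -> ps i A = \d_(a i) A) ->
    forall A, measurable A ->
      psi ps A = (((n%:R)^-1 : R)%:E * \sum_(i < n) \d_(a i) A)%E.

(* median of a list of 2n-1 reals: the n-th smallest *)
Definition median (R : realType) (n : nat) (s : seq R) : R :=
  nth 0 (sort <=%R s) n.-1.

Definition isPropCum (R : realType) (n : nat) (L : set R)
  (psi : ('I_n -> probability R R) -> probability R R) : Prop :=
  forall ps, (forall i, onL L (ps i)) ->
    forall a, L a ->
      cdf L (psi ps) a =
        (median n ([seq fine (cdf L (ps i) a) | i <- enum 'I_n] ++
                   [seq k%:R / n%:R | k <- iota 1 n.-1]))%:E.

(* Main.v *)
Require Import Defs.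
From HB Require Import structures.
From mathcomp Require Import all_boot all_order all_algebra.
From mathcomp Require Import all_classical all_reals all_analysis.
From mathcomp Require Import ring lra.
Import Order.TTheory GRing.Theory Num.Theory.
Import numFieldTopology.Exports numFieldNormedType.Exports.
Local Open Scope classical_set_scope.
Local Open Scope ring_scope.
Set Implicit Arguments. Unset Strict Implicit. Unset Printing Implicit Defensive.
Section Med.
Variable R : realType.
Implicit Types (s : seq R).

Lemma nth_sorted_P (P : pred R) (u : seq R) k :
  (forall x y, x <= y -> P y -> P x) -> sorted <=%R u -> (k < size u)%N ->
  P (nth 0 u k) = (k < count P u)%N.
Proof.
move=> Pdn; elim: u k => [|x u IH] k //= su ks.
have su' : sorted <=%R u by exact: (path_sorted su).
case Px: (P x) => /=.
  case: k ks => [|k] ks //=.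
  by rewrite IH // ltnS.
have allx : all (fun y => x <= y) u by apply: order_path_min => //; exact: le_trans.
have cu : count P u = 0%N.
  apply/eqP; rewrite -leqn0 leqNgt -has_count; apply/negP => /hasP [y yu Py].
  by move: (allP allx y yu) => xy; rewrite (Pdn _ _ xy Py) in Px.
rewrite cu /= ltn0; apply/negbTE/negP => Pk.
case: k ks Pk => [|k] ks /= Pk; first by rewrite Pk in Px.
have yu : nth 0 u k \in u by apply: mem_nth.
by move: (allP allx _ yu) => xy; rewrite (Pdn _ _ xy Pk) in Px.
Qed.

Lemma nth_sort_P (P : pred R) s k :
  (forall x y, x <= y -> P y -> P x) -> (k < size s)%N ->
  P (nth 0 (sort <=%R s) k) = (k < count P s)%N.
Proof.
move=> Pdn ks; rewrite nth_sorted_P //.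
- by move: (perm_sort <=%R s) => /permPl /permP ->.
- by apply: sort_sorted; exact: le_total.
- by rewrite size_sort.
Qed.

Lemma median_leP n s t : (0 < n)%N -> (n <= size s)%N ->
  (median n s <= t) = (n <= count (fun x : R => (x <= t)%R) s)%N.
Proof.
move=> n0 ns; rewrite /median (@nth_sort_P (fun x : R => (x <= t)%R)).
- by case: n n0 ns.
- by move=> x y xy yt; exact: le_trans xy yt.
- by case: n n0 ns.
Qed.

Lemma median_ltP n s t : (0 < n)%N -> (n <= size s)%N ->
  (median n s < t) = (n <= count (fun x : R => (x < t)%R) s)%N.
Proof.
move=> n0 ns; rewrite /median (@nth_sort_P (fun x : R => (x < t)%R)).
- by case: n n0 ns.
- by move=> x y xy yt; exact: le_lt_trans xy yt.
- by case: n n0 ns.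
Qed.

End Med.
Section Medx.
Variable R : realType.

Definition ph (n : nat) : seq R := [seq k%:R / n%:R | k <- iota 1 n.-1].
Definition Sx n (x : 'I_n -> R) := [seq x i | i <- enum 'I_n] ++ ph n.
Definition medx n (x : 'I_n -> R) := median n (Sx x).

Lemma size_Sx n (x : 'I_n -> R) : size (Sx x) = (n + n.-1)%N.
Proof. by rewrite /Sx size_cat !size_map -enumT size_enum_ord size_iota. Qed.

Lemma count_map_le (I : Type) (s : seq I) (f g : I -> R) (P Q : pred R) :
  (forall i, P (f i) -> Q (g i)) -> (count P (map f s) <= count Q (map g s))%N.
Proof.
move=> PQ; elim: s => //= i s IH; apply: leq_add => //.
by case Pf: (P (f i)) => //=; rewrite (PQ _ Pf).
Qed.

Lemma count_Sx_le n (x y : 'I_n -> R) (P Q : pred R) :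
  (forall i, P (x i) -> Q (y i)) -> (forall v, P v -> Q v) ->
  (count P (Sx x) <= count Q (Sx y))%N.
Proof.
move=> h1 h2; rewrite /Sx !count_cat leq_add //; first exact: count_map_le.
exact: sub_count.
Qed.

Lemma n_le_size n (x : 'I_n -> R) : (n <= size (Sx x))%N.
Proof. by rewrite size_Sx leq_addr. Qed.

Lemma medx_shift n (x y : 'I_n -> R) e : (0 < n)%N -> 0 <= e ->
  (forall i, y i <= x i + e) -> medx y <= medx x + e.
Proof.
move=> n0 e0 h; set m := medx x.
have : (n <= count (fun v : R => (v <= m)%R) (Sx x))%N.
  by rewrite -median_leP // n_le_size.
rewrite /medx median_leP // ?n_le_size // => /leq_trans; apply.
apply: count_Sx_le => [i xm|v vm] /=.
  by apply: le_trans (h i) _; rewrite lerD2r.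
by apply: le_trans vm _; rewrite lerDl.
Qed.

Lemma medx_mono n (x y : 'I_n -> R) : (0 < n)%N ->
  (forall i, y i <= x i) -> medx y <= medx x.
Proof.
move=> n0 h; rewrite -[medx x]addr0; apply: medx_shift => // i.
by rewrite addr0.
Qed.

Lemma count_map_all n (s : seq 'I_n) (x : 'I_n -> R) (P : pred R) :
  (forall i, P (x i)) -> count P (map x s) = size s.
Proof. by move=> h; elim: s => //= i s ->; rewrite h. Qed.

Lemma medx_le_all n (x : 'I_n -> R) t : (0 < n)%N -> (forall i, x i <= t) -> medx x <= t.
Proof.
move=> n0 h; rewrite /medx median_leP ?n_le_size // /Sx count_cat.
apply: leq_trans (leq_addr _ _).
by rewrite count_map_all // size_enum_ord.
Qed.

Lemma medx_ge_all n (x : 'I_n -> R) t : (0 < n)%N -> (forall i, t <= x i) -> t <= medx x.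
Proof.
move=> n0 h; rewrite leNgt /medx median_ltP ?n_le_size // /Sx count_cat.
rewrite -ltnNge.
have -> : count (fun v : R => (v < t)%R) [seq x i | i <- enum 'I_n] = 0%N.
  by apply/eqP; rewrite -leqn0 leqNgt -has_count; apply/hasP => -[v /mapP[i _ ->]]; rewrite ltNge h.
rewrite add0n; apply: leq_ltn_trans (count_size _ _) _.
by rewrite size_map size_iota prednK.
Qed.

Definition replx n (x : 'I_n -> R) (i : 'I_n) (y : R) : 'I_n -> R :=
  fun j => if j == i then y else x j.

Lemma medx_repl_lt n (x : 'I_n -> R) i y : (0 < n)%N ->
  x i < medx x -> medx x <= medx (replx x i y).
Proof.
move=> n0 xi; rewrite leNgt; apply/negP.
rewrite {2}/medx median_ltP ?n_le_size // => h.
suff : medx x < medx x by rewrite ltxx.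
rewrite {2}/medx median_ltP ?n_le_size //; apply: leq_trans h _.
apply: count_Sx_le => // j; rewrite /replx; case: eqP => [-> _|//]; exact: xi.
Qed.

Lemma medx_repl_gt n (x : 'I_n -> R) i y : (0 < n)%N ->
  medx x < x i -> medx (replx x i y) <= medx x.
Proof.
move=> n0 xi; rewrite {1}/medx median_leP ?n_le_size //.
have : (n <= count (fun v : R => (v <= medx x)%R) (Sx x))%N.
  by rewrite -median_leP // n_le_size.
move/leq_trans; apply; apply: count_Sx_le => // j; rewrite /replx.
case: eqP => // -> /=; by rewrite leNgt xi.
Qed.

End Medx.
Section Medchar.
Variable R : realType.

Lemma count_ph_ge n (P : pred R) u : (u <= n.-1)%N ->
  (forall k, (0 < k <= u)%N -> P (k%:R / n%:R)) -> (u <= count P (ph R n))%N.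
Proof.
move=> un h; rewrite /ph -(subnKC un) iotaD map_cat count_cat.
apply: leq_trans (leq_addr _ _); rewrite count_map.
have -> : count (preim (fun k : nat => k%:R / n%:R) P) (iota 1 u) = size (iota 1 u).
  apply/eqP; rewrite -all_count; apply/allP => k; rewrite mem_iota => /andP[k1 k2].
  by apply: h; rewrite k1 -ltnS -(add1n u).
by rewrite size_iota.
Qed.

Lemma count_ph_le n (P : pred R) v : (0 < v <= n)%N ->
  (forall k, (v <= k)%N -> ~~ P (k%:R / n%:R)) -> (count P (ph R n) <= v.-1)%N.
Proof.
move=> /andP[v0 vn] h.
have vn' : (v.-1 <= n.-1)%N by rewrite -!subn1 leq_sub2r.
rewrite /ph -(subnKC vn') iotaD map_cat count_cat.
have -> : count P [seq k%:R / n%:R | k <- iota (1 + v.-1) (n.-1 - v.-1)] = 0%N.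
  apply/eqP; rewrite -leqn0 leqNgt -has_count; apply/hasP => -[w /mapP[k]].
  rewrite mem_iota add1n prednK // => /andP[vk _] -> Pk.
  by move: (h k vk); rewrite Pk.
by rewrite addn0; apply: leq_trans (count_size _ _) _; rewrite size_map size_iota.
Qed.

Lemma count_enum_predC n (x : 'I_n -> R) (P : pred R) :
  count (predC P) [seq x i | i <- enum 'I_n] = (n - count P [seq x i | i <- enum 'I_n])%N.
Proof.
have cle : (count P [seq x i | i <- enum 'I_n] <= n)%N.
  by apply: leq_trans (count_size _ _) _; rewrite size_map size_enum_ord.
apply/eqP; rewrite -(eqn_add2l (count P [seq x i | i <- enum 'I_n])) subnKC //.
by rewrite count_predC size_map size_enum_ord.
Qed.

Lemma count_enum_le n (x : 'I_n -> R) (P : pred R) :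
  (count P [seq x i | i <- enum 'I_n] <= n)%N.
Proof. by apply: leq_trans (count_size _ _) _; rewrite size_map size_enum_ord. Qed.

Lemma medx_char n (x : 'I_n -> R) t : (0 < n)%N ->
  (forall i, 0 <= x i <= 1) -> 0 <= t <= 1 ->
  (count (fun v : R => (t < v)%R) [seq x i | i <- enum 'I_n])%:R <= n%:R * t ->
  n%:R * t <= (count (fun v : R => (t <= v)%R) [seq x i | i <- enum 'I_n])%:R ->
  medx x = t.
Proof.
move=> n0 x01 /andP[t0 t1] hu hv.
set M := [seq x i | i <- enum 'I_n] in hu hv.
set u := count _ M in hu; set v := count _ M in hv.
have npos : 0 < n%:R :> R by rewrite ltr0n.
apply/eqP; rewrite eq_le; apply/andP; split.
- rewrite /medx median_leP ?n_le_size // /Sx count_cat.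
  have -> : count (fun w : R => (w <= t)%R) M = (n - u)%N.
    rewrite -count_enum_predC; apply: eq_count => w /=; by rewrite leNgt.
  have un : (u < n)%N.
    rewrite ltn_neqAle count_enum_le andbT; apply/eqP => un.
    have t1' : t = 1.
      apply/eqP; rewrite eq_le t1 /=.
      by rewrite -(ler_pM2l npos) mulr1 -{1}un.
    have : u = 0%N.
      apply/eqP; rewrite -leqn0 leqNgt -has_count; apply/hasP => -[w /mapP[i _ ->]].
      by rewrite t1' ltNge; case/andP: (x01 i) => _ ->.
    by move=> u0; move: n0; rewrite -un u0.
  have : (u <= count (fun w : R => (w <= t)%R) (ph R n))%N.
    apply: count_ph_ge; first by rewrite -ltnS prednK.
    move=> k /andP[_ ku] /=; rewrite ler_pdivrMr // mulrC.
    by apply: le_trans hu; rewrite ler_nat.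
  move=> h; apply: leq_trans (leq_add (leqnn (n - u)) h).
  by rewrite subnK // ltnW.
- rewrite leNgt /medx median_ltP ?n_le_size // /Sx count_cat -ltnNge.
  have -> : count (fun w : R => (w < t)%R) M = (n - v)%N.
    rewrite -count_enum_predC; apply: eq_count => w /=; by rewrite ltNge.
  have v0 : (0 < v)%N.
    rewrite lt0n; apply/eqP => v0.
    have t0' : t = 0.
      apply/eqP; rewrite eq_le t0 andbT.
      by rewrite -(ler_pM2l npos) mulr0; move: hv; rewrite v0.
    have : v = n.
      rewrite /v; apply/eqP; rewrite count_map_all ?size_enum_ord //.
      by move=> i; rewrite t0'; case/andP: (x01 i).
    by move=> vn; move: n0; rewrite -vn v0.
  have vn : (v <= n)%N by apply: count_enum_le.
  have : (count (fun w : R => (w < t)%R) (ph R n) <= v.-1)%N.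
    apply: count_ph_le; first by rewrite v0 vn.
    move=> k vk /=; rewrite -leNgt ler_pdivlMr // mulrC.
    by apply: le_trans hv _; rewrite ler_nat.
  move=> h; apply: (@leq_ltn_trans (n - v + v.-1)); first by rewrite leq_add2l.
  rewrite -subn1 addnBA // subnK // subn1 prednK //.
Qed.

End Medchar.
Section Med01.
Variable R : realType.

Lemma sum_count01 (I : Type) (s : seq I) (x : I -> R) :
  (forall i, x i = 0 \/ x i = 1) ->
  \sum_(i <- s) x i = (count (fun v : R => v == 1) (map x s))%:R.
Proof.
move=> h; elim: s => [|i s IH]; first by rewrite big_nil.
rewrite big_cons IH /= natrD; congr (_ + _).
by case: (h i) => ->; rewrite ?eqxx // eq_sym (negbTE (oner_neq0 _)).
Qed.

Lemma sum_ord_enum n (x : 'I_n -> R) : \sum_(i < n) x i = \sum_(i <- enum 'I_n) x i.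
Proof. by rewrite big_enum. Qed.

Lemma medx01 n (x : 'I_n -> R) : (0 < n)%N ->
  (forall i, x i = 0 \/ x i = 1) ->
  medx x = (\sum_(i < n) x i) / n%:R.
Proof.
move=> n0 h; rewrite sum_ord_enum sum_count01 //.
set c := count _ _.
have npos : 0 < n%:R :> R by rewrite ltr0n.
have cn : (c <= n)%N by apply: count_enum_le.
have x01 i : 0 <= x i <= 1 by case: (h i) => ->; rewrite ?lexx ?ler01.
apply: medx_char => //.
- by rewrite divr_ge0 ?ler0n //= ler_pdivrMr // mul1r ler_nat.
- rewrite [n%:R * _]mulrC divfK ?gt_eqF // ler_nat; apply: count_map_le => i /=.
  case: (h i) => -> //; by rewrite ltNge divr_ge0 ?ler0n.
- rewrite [n%:R * _]mulrC divfK ?gt_eqF // ler_nat; apply: count_map_le => i /=.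
  case: (h i) => -> //=; first by rewrite eq_sym (negbTE (oner_neq0 _)).
  by rewrite ler_pdivrMr // mul1r ler_nat.
Qed.

End Med01.
Section Transfer.
Variable R : realType.
Definition toR (mu : set (measurableTypeR R) -> \bar R) : set R -> \bar R := fun A => mu A.
Section T1.
Variable mu : probability (measurableTypeR R) R.
HB.instance Definition _ := isMeasure.Build _ R R (toR mu) (measure0 mu) (measure_ge0 mu) (measure_semi_sigma_additive (s:=mu)).
HB.instance Definition _ := Measure_isProbability.Build _ R R (toR mu) (probability_setT mu).
End T1.
Definition ofR (P : set R -> \bar R) : set (measurableTypeR R) -> \bar R := fun A => P A.
Section T2.
Variable P : probability R R.
HB.instance Definition _ := isMeasure.Build _ (measurableTypeR R) R (ofR P) (measure0 P) (measure_ge0 P) (measure_semi_sigma_additive (s:=P)).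
HB.instance Definition _ := Measure_isProbability.Build _ (measurableTypeR R) R (ofR P) (probability_setT P).
End T2.
End Transfer.

Section Fd.
Variable R : realType.

Definition idTR : measurableTypeR R -> R := idfun.
HB.instance Definition _ :=
  @isMeasurableFun.Build _ _ _ _ idTR (@measurable_id _ _ setT).

Definition Fd (p : probability R R) (a : R) : R := fine (p `]-oo, a]%classic).

Lemma FdE (p : probability R R) a : Fd p a = fine (cdf (idTR : {RV (ofR p) >-> R}) a).
Proof. by []. Qed.

Lemma fin_prob (p : probability R R) A : measurable A -> (p A = (fine (p A))%:E)%E.
Proof. by move=> mA; rewrite fineK // fin_num_measure. Qed.

Lemma FdEe (p : probability R R) a : (p `]-oo, a]%classic = (Fd p a)%:E)%E.
Proof. by rewrite /Fd fineK // fin_num_measure. Qed.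

Lemma Fd_ge0 p a : (0 <= Fd p a)%R.
Proof. by rewrite /Fd fine_ge0. Qed.

Lemma Fd_le1 p a : (Fd p a <= 1)%R.
Proof. by rewrite -lee_fin -FdEe probability_le1. Qed.

Lemma Fd_nd p : {homo Fd p : x y / (x <= y)%R}.
Proof.
move=> x y xy; rewrite -lee_fin -!FdEe le_measure ?inE //.
by apply: subitvPr; rewrite bnd_simp.
Qed.

Lemma Fd_rc p : right_continuous (Fd p).
Proof.
move=> a; rewrite FdE; apply: fine_cvg.
by rewrite fineK ?fin_num_measure//; exact: cdf_right_continuous.
Qed.

Lemma Fd_Ny p : Fd p @ -oo --> (0:R).
Proof.
have -> : Fd p = fun r => fine (cdf (idTR : {RV (ofR p) >-> R}) r) by [].
exact/fine_cvg/cvg_cdfNy0.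
Qed.

Lemma Fd_y p : Fd p @ +oo --> (1:R).
Proof.
have -> : Fd p = fun r => fine (cdf (idTR : {RV (ofR p) >-> R}) r) by [].
exact/fine_cvg/cvg_cdfy1.
Qed.

End Fd.
Section G.
Variable R : realType.
Variable n' : nat.
Local Notation n := n'.+1.
Variable ps : 'I_n -> probability R R.

Definition G (a : R) : R := medx (fun i => Fd (ps i) a).
Definition SF (a : R) : R := \sum_(i < n) Fd (ps i) a.

Lemma G_nd : {homo G : x y / (x <= y)%R}.
Proof. by move=> x y xy; apply: medx_mono => // i; apply: Fd_nd. Qed.

Lemma G_ge0 a : 0 <= G a.
Proof. by apply: medx_ge_all => // i; exact: Fd_ge0. Qed.

Lemma G_le1 a : G a <= 1.
Proof. by apply: medx_le_all => // i; exact: Fd_le1. Qed.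

Lemma G_rc : right_continuous G.
Proof.
move=> a; apply/cvgrPdist_le => e e0.
have h i : \forall y \near a^'+, `|Fd (ps i) a - Fd (ps i) y| <= e.
  exact: ((cvgrPdist_le _ _).1 (@Fd_rc _ (ps i) a) e e0).
have H : \forall y \near a^'+, forall i, `|Fd (ps i) a - Fd (ps i) y| <= e.
  by apply: filter_forall.
near=> y.
have hy : forall i, `|Fd (ps i) a - Fd (ps i) y| <= e by near: y; exact: H.
have ay : a < y by near: y; exact: nbhs_right_gt.
have Gay : G a <= G y by apply: G_nd; exact: ltW.
rewrite ler0_norm ?subr_le0 // opprB lerBlDl.
apply: medx_shift => //; first exact: ltW.
move=> i; move: (hy i); rewrite ler0_norm; last first.
  by rewrite subr_le0 Fd_nd // ltW.
by rewrite opprB lerBlDl addrC.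
Unshelve. all: by end_near. Qed.

Lemma Fd_le_SF i a : Fd (ps i) a <= SF a.
Proof.
rewrite /SF (bigD1 i) //= lerDl; apply: sumr_ge0 => j _; exact: Fd_ge0.
Qed.

Lemma SF_Ny : SF @ -oo --> (0:R).
Proof.
have -> : (0:R) = \sum_(i < n) (0:R) by rewrite big1.
apply: cvg_big => //; first exact: add_continuous.
move=> i _; exact: Fd_Ny.
Qed.

Lemma G_Ny : G @ -oo --> (0:R).
Proof.
apply: (@squeeze_cvgr _ _ _ _ (cst 0) SF) => //; last exact: SF_Ny; last exact: cvg_cst.
near=> x; rewrite G_ge0 /=; apply: medx_le_all => // i; exact: Fd_le_SF.
Unshelve. all: by end_near. Qed.

Definition SC (a : R) : R := \sum_(i < n) (1 - Fd (ps i) a).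

Lemma SC_y : SC @ +oo --> (0:R).
Proof.
have -> : (0:R) = \sum_(i < n) (1 - 1 : R) by rewrite big1 // => i _; rewrite subrr.
apply: cvg_big => //; first exact: add_continuous.
move=> i _; apply: cvgB; [exact: cvg_cst | exact: Fd_y].
Qed.

Lemma G_y : G @ +oo --> (1:R).
Proof.
apply: (@squeeze_cvgr _ _ _ _ (fun a => 1 - SC a) (cst 1)) => //; last exact: cvg_cst.
  near=> x; rewrite G_le1 andbT; apply: medx_ge_all => // i.
  rewrite lerBlDr -lerBlDl /SC (bigD1 i) //= lerDl; apply: sumr_ge0 => j _.
  by rewrite subr_ge0 Fd_le1.
rewrite -[X in _ --> X]subr0; apply: cvgB; [exact: cvg_cst | exact: SC_y].
Unshelve. all: by end_near. Qed.

End G.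
HB.instance Definition _ (R : realType) n' (ps : 'I_n'.+1 -> probability R R) :=
  isCumulative.Build R _ R (G ps) (@G_nd R n' ps) (@G_rc R n' ps).
HB.instance Definition _ (R : realType) n' (ps : 'I_n'.+1 -> probability R R) :=
  isCumulativeBounded.Build R 0 1 (G ps) (@G_Ny R n' ps) (@G_y R n' ps).

Section SFH.
Variable R : realType.
Variable n' : nat.
Local Notation n := n'.+1.
Variable ps : 'I_n -> probability R R.

Lemma SF_nd : {homo SF ps : x y / (x <= y)%R}.
Proof. by move=> x y xy; apply: ler_sum => i _; apply: Fd_nd. Qed.

Lemma SF_rc : right_continuous (SF ps).
Proof.
move=> a; apply: cvg_big => //; first exact: add_continuous.
move=> i _; exact: Fd_rc.
Qed.

Definition HF (a : R) : R := SF ps a - G ps a.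

Lemma HFE z : HF z = SF ps z - G ps z.
Proof. by []. Qed.

Lemma HF_nd : {homo HF : x y / (x <= y)%R}.
Proof.
move=> x y xy; rewrite /HF.
suff h : G ps y <= G ps x + (SF ps y - SF ps x) by lra.
apply: medx_shift => //.
  by rewrite subr_ge0 SF_nd.
move=> i; rewrite -lerBlDl /SF -sumrB (bigD1 i) //= lerDl.
by apply: sumr_ge0 => j _; rewrite subr_ge0 Fd_nd.
Qed.

Lemma HF_rc : right_continuous HF.
Proof. move=> a; apply: cvgB; [exact: SF_rc | exact: G_rc]. Qed.

End SFH.

HB.instance Definition _ (R : realType) n' (ps : 'I_n'.+1 -> probability R R) :=
  isCumulative.Build R _ R (SF ps) (@SF_nd R n' ps) (@SF_rc R n' ps).
HB.instance Definition _ (R : realType) n' (ps : 'I_n'.+1 -> probability R R) :=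
  isCumulative.Build R _ R (HF ps) (@HF_nd R n' ps) (@HF_rc R n' ps).

Section LS.
Variable R : realType.

Lemma LS_oc (f : cumulative R R) (x y : R) : (x <= y)%R ->
  lebesgue_stieltjes_measure f `]x, y]%classic = (f y - f x)%:E.
Proof.
move=> xy; rewrite /lebesgue_stieltjes_measure /measure_extension/=.
rewrite measurable_mu_extE/=; last exact: is_ocitv.
by rewrite wlength_itv_bnd.
Qed.

Lemma LS_eq (f : cumulative R R) (mu : {measure set (measurableTypeR R) -> \bar R}) :
  (forall x y, (x <= y)%R -> mu `]x, y]%classic = (f y - f x)%:E) ->
  forall A, measurable A -> lebesgue_stieltjes_measure f A = mu A.
Proof.
move=> h; apply: lebesgue_stieltjes_measure_unique => I [[a b]]/= _ <-.
have [ab | ba] := leP a b; last first.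
  by rewrite set_itv_ge ?measure0// bnd_simp -leNgt ltW.
by rewrite LS_oc // h.
Qed.

Lemma P_oc (p : probability R R) (x y : R) : (x <= y)%R ->
  p `]x, y]%classic = (Fd p y - Fd p x)%:E.
Proof.
move=> xy.
have -> : `]x, y]%classic = `]-oo, y]%classic `\` `]-oo, x]%classic.
  by rewrite -[RHS]setCK setCD setCitvl setUC -[LHS]setCK setCitv.
rewrite measureD ?setIidr//.
- by rewrite EFinB /Fd !fineK ?fin_num_measure.
- by apply: subset_itvl; rewrite bnd_simp.
by rewrite -ge0_fin_numE// fin_num_measure.
Qed.

Lemma LS_Ny (f : cumulativeBounded (0:R) (1:R)) r :
  lebesgue_stieltjes_measure f `]-oo, r]%classic = (f r)%:E.
Proof.
rewrite itvNybndEbigcup.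
have : lebesgue_stieltjes_measure f `]-n%:R, r]%classic @[n --> \oo] --> (f r)%:E.
  suff : ((f r)%:E - (f (-n%:R))%:E)%E @[n --> \oo] --> (f r)%:E.
    apply: cvg_trans; apply: near_eq_cvg; near=> n.
    rewrite /lebesgue_stieltjes_measure /measure_extension/=.
    rewrite measurable_mu_extE/= ?wlength_itv_bnd//; last exact: is_ocitv.
    by rewrite lerNl; near: n; exact: nbhs_infty_ger.
  rewrite -[X in _ --> X](sube0 (f r)%:E); apply: (cvgeB _ (cvg_cst _ )) => //.
  apply: (cvg_comp _ _ (cvg_comp _ _ _ (cumulativeNy f))) => //.
  by apply: (cvg_comp _ _ cvgr_idn); rewrite ninfty.
have : lebesgue_stieltjes_measure f `]- n%:R, r]%classic @[n --> \oo] -->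
   lebesgue_stieltjes_measure f (\bigcup_n `]-n%:R, r]%classic).
  apply: nondecreasing_cvg_mu => //; first exact: bigcup_measurable.
  by move=> *; apply/subsetPset/subset_itv; rewrite leBSide//= lerN2 ler_nat.
exact: cvg_unique.
Unshelve. all: by end_near. Qed.

Lemma measure_onL d (T : measurableType d) (mu : {measure set T -> \bar R}) (L A : set T) :
  measurable L -> measurable A -> mu (~` L) = 0%E -> mu (L `&` A) = mu A.
Proof.
move=> mL mA h; rewrite (measureDI mu mA mL) setIC.
rewrite (@subset_measure0 _ _ _ mu (A `\` L) (~` L)) ?add0e //.
- exact: measurableD.
- exact: (measurableC mL).
Qed.

End LS.
Section Exist.
Variable R : realType.
Variable n' : nat.
Local Notation n := n'.+1.
Variable L : set R.
Hypothesis mL : measurable L.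

Definition psi0 (ps : 'I_n -> probability R R) : probability R R :=
  toR (lebesgue_stieltjes_measure (G ps)).

Definition nu (ps : 'I_n -> probability R R) :=
  msum (fun k => (ofR (ps (inord k)) : {measure set (measurableTypeR R) -> \bar R})) n.

Lemma nuE ps A : nu ps A = (\sum_(i < n) ps i A)%E.
Proof. by rewrite /nu /msum; apply: eq_bigr => i _; rewrite inord_val. Qed.

Lemma nu_oc ps x y : x <= y -> nu ps `]x, y]%classic = (SF ps y - SF ps x)%:E.
Proof.
move=> xy; rewrite nuE (eq_bigr (fun i => (Fd (ps i) y - Fd (ps i) x)%:E)).
  by rewrite sumEFin /SF sumrB.
by move=> i _; rewrite P_oc.
Qed.

Lemma mu_le_nu ps A : measurable A ->
  (lebesgue_stieltjes_measure (G ps) A <= nu ps A)%E.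
Proof.
move=> mA.
have e1 := @LS_eq R (SF ps) (nu ps) (@nu_oc ps) A mA.
have e2 := @LS_eq R (SF ps) (measure_add (lebesgue_stieltjes_measure (G ps))
   (lebesgue_stieltjes_measure (HF ps))).
apply: (@le_trans _ _ (lebesgue_stieltjes_measure (SF ps) A)); last by rewrite e1.
set mu := lebesgue_stieltjes_measure (G ps).
set la := lebesgue_stieltjes_measure (HF ps).
rewrite e2 //; last first.
  move=> x y xy.
  transitivity (mu `]x, y]%classic + la `]x, y]%classic)%E; first exact: measure_addE.
  rewrite /mu /la !LS_oc // -EFinD; congr (_%:E); rewrite /reverse_coercion /= !HFE; lra.
apply: (@le_trans _ _ (mu A + la A)%E); first by rewrite leeDl.
have E : measure_add mu la A = (mu A + la A)%E by exact: measure_addE.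
by rewrite -E.
Qed.

Lemma cdf_onL (p : probability R R) a : onL L p -> Defs.cdf L p a = (Fd p a)%:E.
Proof. by move=> h; rewrite /Defs.cdf measure_onL // /Fd fineK // fin_num_measure. Qed.

Lemma psi0_onL ps : (forall i, onL L (ps i)) -> onL L (psi0 ps).
Proof.
move=> h; rewrite /onL; apply/eqP; rewrite eq_le measure_ge0 andbT.
apply: le_trans (mu_le_nu ps (measurableC mL)) _.
by rewrite nuE big1 // => i _; exact: h.
Qed.

Lemma psi0_cdf ps a : (forall i, onL L (ps i)) -> Defs.cdf L (psi0 ps) a = (G ps a)%:E.
Proof.
move=> h; rewrite /Defs.cdf measure_onL //; last exact: (psi0_onL h).
exact: LS_Ny.
Qed.

Lemma G_eq ps a : (forall i, onL L (ps i)) ->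
  G ps a = median n ([seq fine (Defs.cdf L (ps i) a) | i <- enum 'I_n] ++
                   [seq k%:R / n%:R | k <- iota 1 n.-1]).
Proof.
move=> h; rewrite /G /medx /Sx /ph; congr (median _ (_ ++ _)).
by apply: eq_map => i; rewrite cdf_onL.
Qed.

Lemma psi0_PAF : isPAF L psi0.
Proof. by move=> ps h; exact: psi0_onL. Qed.

Lemma psi0_PropCum : isPropCum L psi0.
Proof. by move=> ps h a _; rewrite psi0_cdf // G_eq. Qed.

Lemma psi0_SP : LevelSP L psi0.
Proof.
move=> i ps q a hps hq La.
have hr : forall j, onL L (repl ps i q j) by move=> j; rewrite /repl; case: eqP.
rewrite !psi0_cdf // cdf_onL // !lte_fin !lee_fin.
have -> : G (repl ps i q) a = medx (replx (fun j => Fd (ps j) a) i (Fd q a)).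
  by rewrite /G; congr medx; apply/funext => j; rewrite /repl /replx; case: eqP.
split => h; first exact: medx_repl_lt.
exact: medx_repl_gt.
Qed.

Lemma psi0_prop : proportional L psi0.
Proof.
move=> a' ps La' hd A mA.
have Fd01 i z : Fd (ps i) z = 0 \/ Fd (ps i) z = 1.
  rewrite /Fd hd // diracE /=.
  by case: (a' i \in `]-oo, z]%classic); [right | left]; rewrite /= ?indicatorE.
have GE z : G ps z = SF ps z / n%:R by rewrite /G medx01.
have r0 : (0 <= (n%:R)^-1 :> R)%R by rewrite invr_ge0 ler0n.
pose r := NngNum r0.
have e := @LS_eq R (G ps) (mscale r (nu ps)).
transitivity (mscale r (nu ps) A).
  apply: e => // x y xy.
  transitivity (r%:num%:E * nu ps `]x, y]%classic)%E; first by [].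
  rewrite nu_oc // -EFinM; congr (_%:E).
  by rewrite /reverse_coercion /= !GE mulrC mulrBl.
transitivity (r%:num%:E * nu ps A)%E; first by [].
rewrite nuE; congr (_ * _)%E.
by apply: eq_bigr => i _; exact: hd.
Qed.

End Exist.
Section Uniq.
Variable R : realType.
Variable n' : nat.
Local Notation n := n'.+1.
Variable L : set R.
Hypothesis mL : measurable L.
Variable psi : ('I_n -> probability R R) -> probability R R.
Hypothesis hPAF : isPAF L psi.
Hypothesis hSP : LevelSP L psi.
Hypothesis hprop : proportional L psi.
Variable a : R.
Hypothesis La : L a.

Local Notation cdfa p := (Defs.cdf L p a).

Lemma mLa : measurable (L `&` `]-oo, a]%classic).
Proof. by apply: measurableI. Qed.

Lemma cdfa_fin (p : probability R R) : cdfa p = (fine (cdfa p))%:E.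
Proof. by rewrite fineK // fin_num_measure //; exact: mLa. Qed.

Lemma cdfa_le1 (p : probability R R) : (cdfa p <= 1)%E.
Proof. by apply: probability_le1; exact: mLa. Qed.

Lemma cdfa_ge0 (p : probability R R) : (0 <= cdfa p)%E.
Proof. exact: measure_ge0. Qed.

Lemma fcdf01 (p : probability R R) : 0 <= fine (cdfa p) <= 1.
Proof.
by rewrite -!lee_fin -cdfa_fin cdfa_le1 cdfa_ge0.
Qed.

Definition dP (b : R) : probability R R := \d_b.

Lemma onL_d b : L b -> onL L (dP b).
Proof.
move=> Lb; rewrite /onL.
transitivity (\d_b (~` L) : \bar R); first by [].
by rewrite diracE memNset //= => /(_ Lb).
Qed.

Lemma cdf_da : cdfa (dP a) = 1%E.
Proof.
transitivity (\d_a (L `&` `]-oo, a]%classic) : \bar R); first by [].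
by rewrite diracE mem_set //; split => //=; rewrite in_itv /=.
Qed.

Lemma cdf_dc c : a < c -> cdfa (dP c) = 0%E.
Proof.
move=> ac; transitivity (\d_c (L `&` `]-oo, a]%classic) : \bar R); first by [].
rewrite diracE memNset //= => -[_].
by rewrite in_itv /= leNgt ac.
Qed.

Lemma repl_onL (Y : 'I_n -> probability R R) j q :
  (forall i, onL L (Y i)) -> onL L q -> forall i, onL L (repl Y j q i).
Proof. by move=> hY hq i; rewrite /repl; case: eqP. Qed.

Lemma repl_back (Y : 'I_n -> probability R R) j q : repl (repl Y j q) j (Y j) = Y.
Proof. by apply/funext => i; rewrite /repl; case: eqP => // ->. Qed.

Lemma up1 (Y : 'I_n -> probability R R) j : (forall i, onL L (Y i)) ->
  (cdfa (psi Y) <= cdfa (psi (repl Y j (dP a))))%E.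
Proof.
move=> hY; set Y' := repl Y j (dP a).
have hY' : forall i, onL L (Y' i) by apply: repl_onL => //; exact: onL_d.
have [_ h2] := hSP j hY' (hY j) La.
rewrite repl_back in h2.
have Y'j : Y' j = dP a by rewrite /Y' /repl eqxx.
have [lt1|ge1] := ltP (cdfa (psi Y')) 1%E.
  by apply: h2; rewrite Y'j cdf_da.
exact: le_trans (cdfa_le1 _) ge1.
Qed.

Lemma down1 (Y : 'I_n -> probability R R) j c : L c -> a < c -> (forall i, onL L (Y i)) ->
  (cdfa (psi (repl Y j (dP c))) <= cdfa (psi Y))%E.
Proof.
move=> Lc ac hY; set Y' := repl Y j (dP c).
have hY' : forall i, onL L (Y' i) by apply: repl_onL => //; exact: onL_d.
have [h1 _] := hSP j hY' (hY j) La.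
rewrite repl_back in h1.
have Y'j : Y' j = dP c by rewrite /Y' /repl eqxx.
have [gt0|le0] := ltP 0%E (cdfa (psi Y')).
  by apply: h1; rewrite Y'j cdf_dc.
exact: le_trans le0 (cdfa_ge0 _).
Qed.

Lemma sum_pred (I : Type) (s : seq I) (P : pred I) :
  \sum_(i <- s) ((P i)%:R : R) = (count P s)%:R.
Proof. by elim: s => [|i s IH]; rewrite ?big_nil // big_cons IH /= natrD. Qed.

Variable ps : 'I_n -> probability R R.
Hypothesis hps : forall i, onL L (ps i).

Definition X j := fine (cdfa (ps j)).
Definition T := fine (cdfa (psi ps)).

Definition Yk (D : 'I_n -> probability R R) (k : nat) : 'I_n -> probability R R :=
  fun j => if (j < k)%N then D j else ps j.

Lemma Yk0 D : Yk D 0 = ps.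
Proof. by apply/funext => j; rewrite /Yk ltn0. Qed.

Lemma Yk_n D : Yk D n = D.
Proof. by apply/funext => j; rewrite /Yk ltn_ord. Qed.

Lemma Yk_ge D k : (n <= k)%N -> Yk D k.+1 = Yk D k.
Proof.
move=> nk; apply/funext => j; rewrite /Yk.
have jk : (j < k)%N by apply: leq_trans (ltn_ord j) nk.
by rewrite jk ltnS ltnW.
Qed.

Lemma Yk_S D k (kn : (k < n)%N) : Yk D k.+1 = repl (Yk D k) (Ordinal kn) (D (Ordinal kn)).
Proof.
apply/funext => j; rewrite /Yk /repl ltnS leq_eqVlt.
case: (eqVneq j (Ordinal kn)) => [->|neq] /=; first by rewrite eqxx.
have -> : (nat_of_ord j == k) = false.
  by apply/negbTE; apply: contra neq => /eqP h; apply/eqP; apply: val_inj.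
by [].
Qed.

Lemma Yk_onL D k : (forall j, onL L (D j)) -> forall j, onL L (Yk D k j).
Proof. by move=> hD j; rewrite /Yk; case: ifP. Qed.

Lemma Yk_at D k (kn : (k < n)%N) : Yk D k (Ordinal kn) = ps (Ordinal kn).
Proof. by rewrite /Yk /= ltnn. Qed.

Lemma cdfX j : cdfa (ps j) = (X j)%:E.
Proof. by rewrite /X -cdfa_fin. Qed.

Lemma cdfT : cdfa (psi ps) = T%:E.
Proof. by rewrite /T -cdfa_fin. Qed.

Definition Du c j := if X j < T then dP c else dP a.
Definition Dd c j := if T < X j then dP a else dP c.

Lemma chain_up c k : L c -> a < c -> (cdfa (psi ps) <= cdfa (psi (Yk (Du c) k)))%E.
Proof.
move=> Lc ac.
have hD : forall j, onL L (Du c j) by move=> j; rewrite /Du; case: ifP => _; exact: onL_d.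
elim: k => [|k IH]; first by rewrite Yk0.
case: (ltnP k n) => kn; last by rewrite Yk_ge.
rewrite Yk_S; set j0 := Ordinal kn.
refine (le_trans IH _).
rewrite /Du; case: ifP => hX; last exact: up1 (Yk_onL _ hD).
have [h1 _] := hSP j0 (Yk_onL k hD) (onL_d Lc) La.
apply: h1; rewrite Yk_at cdfX.
by apply: lt_le_trans IH; rewrite cdfT lte_fin.
Qed.

Lemma chain_down c k : L c -> a < c -> (cdfa (psi (Yk (Dd c) k)) <= cdfa (psi ps))%E.
Proof.
move=> Lc ac.
have hD : forall j, onL L (Dd c j) by move=> j; rewrite /Dd; case: ifP => _; exact: onL_d.
elim: k => [|k IH]; first by rewrite Yk0.
case: (ltnP k n) => kn; last by rewrite Yk_ge.
rewrite Yk_S; set j0 := Ordinal kn.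
refine (le_trans _ IH).
rewrite /Dd; case: ifP => hX; last exact: down1 (Yk_onL _ hD).
have [_ h2] := hSP j0 (Yk_onL k hD) (onL_d La) La.
apply: h2; rewrite Yk_at cdfX.
by apply: le_lt_trans IH _; rewrite cdfT lte_fin.
Qed.

Lemma count_X (P : pred R) (s : seq 'I_n) :
  count (fun i => P (X i)) s = count P [seq X i | i <- s].
Proof. by rewrite count_map. Qed.

Lemma val_D (D : 'I_n -> probability R R) (b : 'I_n -> R) (P : pred R) :
  (forall i, L (b i)) -> (forall i A, measurable A -> D i A = \d_(b i) A) ->
  (forall i, \d_(b i) (L `&` `]-oo, a]%classic) = ((P (X i))%:R)%:E :> \bar R) ->
  cdfa (psi D) = (((n%:R)^-1) * (count P [seq X i | i <- enum 'I_n])%:R)%:E.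
Proof.
move=> Lb hd hv; rewrite /Defs.cdf (hprop Lb hd mLa).
rewrite (eq_bigr (fun i => ((P (X i))%:R)%:E)); last by move=> i _; exact: hv.
by rewrite sumEFin -EFinM sum_ord_enum sum_pred count_X.
Qed.

Lemma hv_up c : L c -> a < c ->
  n%:R * T <= (count (fun v => T <= v) [seq X i | i <- enum 'I_n])%:R.
Proof.
move=> Lc ac.
have := chain_up n Lc ac; rewrite Yk_n cdfT.
rewrite (@val_D (Du c) (fun i => if X i < T then c else a) (fun v => T <= v)).
- rewrite lee_fin => h.
  have npos : 0 < n%:R :> R by rewrite ltr0n.
  apply: le_trans (ler_wpM2l (ler0n _ n) h) _.
  by rewrite mulrA mulfV ?mul1r // gt_eqF.
- by move=> i; case: ifP.
- by move=> i A mA; rewrite /Du; case: ifP.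
move=> i; case: ifP => h /=.
  by rewrite leNgt h; exact: (cdf_dc ac).
by rewrite leNgt h; exact: cdf_da.
Qed.

Lemma hu_down c : L c -> a < c ->
  (count (fun v => T < v) [seq X i | i <- enum 'I_n])%:R <= n%:R * T.
Proof.
move=> Lc ac.
have := chain_down n Lc ac; rewrite Yk_n cdfT.
rewrite (@val_D (Dd c) (fun i => if T < X i then a else c) (fun v => T < v)).
- rewrite lee_fin => h.
  have npos : 0 < n%:R :> R by rewrite ltr0n.
  apply: le_trans _ (ler_wpM2l (ler0n _ n) h).
  by rewrite mulrA mulfV ?mul1r // gt_eqF.
- by move=> i; case: ifP.
- by move=> i A mA; rewrite /Dd; case: ifP.
move=> i; case: ifP => h /=.
  exact: cdf_da.
exact: (cdf_dc ac).
Qed.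

Lemma uniq_at : cdfa (psi ps) =
  (median n ([seq fine (cdfa (ps i)) | i <- enum 'I_n] ++
             [seq k%:R / n%:R | k <- iota 1 n.-1]))%:E.
Proof.
rewrite cdfT; congr (_%:E).
have -> : median n ([seq fine (cdfa (ps i)) | i <- enum 'I_n] ++
             [seq k%:R / n%:R | k <- iota 1 n.-1]) = medx X by [].
suff [hu hv] : (count (fun v => T < v) [seq X i | i <- enum 'I_n])%:R <= n%:R * T /\
    n%:R * T <= (count (fun v => T <= v) [seq X i | i <- enum 'I_n])%:R.
  apply/esym; apply: medx_char => //; [by move=> i; exact: fcdf01 | exact: fcdf01].
have [[c [Lc ac]]|nc] := pselect (exists c, L c /\ a < c).
  by split; [exact: (hu_down Lc ac) | exact: (hv_up Lc ac)].
have all1 : forall p : probability R R, onL L p -> cdfa p = 1%E.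
  move=> p hp; rewrite /Defs.cdf.
  have -> : (L `&` `]-oo, a]%classic) = L `&` setT.
    apply/seteqP; split => x [Lx h]; split => //.
    rewrite /= in_itv /= leNgt; apply/negP => ax; apply: nc; by exists x.
  by rewrite measure_onL //; exact: probability_setT.
have X1 i : X i = 1 by rewrite /X all1.
have T1 : T = 1 by rewrite /T all1 //; exact: hPAF.
rewrite T1 mulr1; split.
  rewrite count_map (eq_count (a2 := pred0)) ?count_pred0 // => i /=.
  by rewrite X1 ltxx.
by rewrite count_map_all ?size_enum_ord // => i; rewrite X1.
Qed.

End Uniq.

Unset Implicit Arguments.

Theorem mainTheorem14 (R : realType) (n : nat) (L : set R) :
  (0 < n)%N -> measurable L -> L !=set0 ->
  (exists psi0 : ('I_n -> probability R R) -> probability R R,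
      isPAF L psi0 /\ isPropCum L psi0 /\ LevelSP L psi0 /\ proportional L psi0) /\
  (forall psi : ('I_n -> probability R R) -> probability R R,
      isPAF L psi -> LevelSP L psi -> proportional L psi -> isPropCum L psi).
Proof.
case: n => [//|n'] _ mL _.
split.
  exists (@psi0 R n').
  split; first exact: (@psi0_PAF R n' L mL).
  split; first exact: (@psi0_PropCum R n' L mL).
  split; first exact: (@psi0_SP R n' L mL).
  exact: (@psi0_prop R n' L).
move=> psi hPAF hSP hprop ps hps a La.
exact: (@uniq_at R n' L mL psi hPAF hSP hprop a La ps hps).
Qed.
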